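(* Let $k\ge2$ and $n\ge1$ be integers and let $G_{k,n}$ be the graph defined below. Then $G_{k,n}$ is type 2 (it has no $(k+1)$-total colouring), and $$k+1<\chi''_c(G_{k,n})\le k+1+\frac1n.$$
   Context: A half-edge has exactly one end vertex. Let $H_k$ be obtained from $K_{k,k}$ by deleting one vertex but keeping its $k$ incident edges as half-edges, and let $H'_k$ be obtained from $H_k$ by deleting $k-2$ of its half-edges (so $H'_k$ has exactly two half-edges, at distinct vertices). Let $B_1,\ldots,B_n$ be copies of $H'_k$, with the two half-edges of $B_i$ named $f_i$ and $f'_i$. Let $B_0$ be a single vertex $u$ with two half-edges $f_0$ and $f'_{n+1}$. The graph $G_{k,n}$ is obtained from the disjoint union of $B_0,B_1,\ldots,B_n$ by joining, for each $0\le i\le n$, the half-edges $f_i$ and $f'_{i+1}$ into an edge $e_i$ between their end vertices. It is a finite graph of maximum degree $k$. A $(k+1)$-total colouring assigns to vertices and edges one of $k+1$ colours so that adjacent vertices, edges sharing an end vertex, and incident vertex–edge pairs get different colours. For integers $p\ge q\ge1$, a $(p,q)$-total colouring assigns colours in $\{0,\ldots,p-1\}$ to vertices and edges such that $q\le|c(a)-c(b)|\le p-q$ for every such adjacent/incident pair $a,b$; $\chi''_c(G)=\inf\{p/q \mid G \text{ has a } (p,q)\text{-total colouring}\}$. *)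

(* Defs.v *)
From mathcomp Require Import all_boot all_order all_algebra.
From mathcomp Require Import classical_sets reals.
Set Implicit Arguments. Unset Strict Implicit. Unset Printing Implicit Defensive.
Import Order.TTheory GRing.Theory Num.Theory.

(* e : rel T is assumed symmetric and irreflexive (a simple graph).
   Vertices coloured by cv : T -> nat; an edge {x,y} (e x y) coloured by
   ce x y, with ce required symmetric on edges.                           *)

Definition cdist (a b : nat) : nat := maxn a b - minn a b.

Definition is_total_colouring (T : finType) (e : rel T) (m : nat)
    (cv : T -> nat) (ce : T -> T -> nat) : Prop :=
  (forall x, cv x < m) /\
      (forall x y, e x y -> ce x y < m) /\
      (forall x y, e x y -> ce x y = ce y x) /\
      (forall x y, e x y -> cv x <> cv y) /\
      (forall x y, e x y -> cv x <> ce x y) /\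
      (forall x y z, e x y -> e x z -> y != z -> ce x y <> ce x z).

Definition has_total_colouring (T : finType) (e : rel T) (m : nat) : Prop :=
  exists cv ce, @is_total_colouring T e m cv ce.

Definition is_pq_total_colouring (T : finType) (e : rel T) (p q : nat)
    (cv : T -> nat) (ce : T -> T -> nat) : Prop :=
  let ok a b := (q <= cdist a b <= p - q)%N in
  (forall x, cv x < p) /\
      (forall x y, e x y -> ce x y < p) /\
      (forall x y, e x y -> ce x y = ce y x) /\
      (forall x y, e x y -> ok (cv x) (cv y)) /\
      (forall x y, e x y -> ok (cv x) (ce x y)) /\
      (forall x y z, e x y -> e x z -> y != z -> ok (ce x y) (ce x z)).

Definition has_pq_total_colouring (T : finType) (e : rel T) (p q : nat) : Prop :=
  exists cv ce, @is_pq_total_colouring T e p q cv ce.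

Definition circ_total_chromatic (R : realType) (T : finType) (e : rel T) : R :=
  inf [set r : R | exists p q : nat,
         [/\ (1 <= q <= p)%N, has_pq_total_colouring e p q
           & r = (p%:R / q%:R)%R]].

(* Vertices: None = u (the block B_0);
   Some (i, inl j) = vertex a_j of block B_{i+1}   (j < k, the side of H_k
                     that keeps the half-edges),
   Some (i, inr l) = vertex b_l of block B_{i+1}   (l < k-1, the surviving
                     vertices of the other side of K_{k,k}).
   In each block, the half-edge f sits at a_0 and f' at a_1.
   Edges: all a_j b_l inside a block; e_0 = u -- a_1 of block 0 (f_0 + f'_1);
   e_i = a_0 of block i-1 -- a_1 of block i (f_i + f'_{i+1}), 1<=i<=n-1;
   e_n = a_0 of block n-1 -- u (f_n + f'_{n+1}).                            *)
Definition Gvert (k n : nat) : finType :=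
  option ('I_n * ('I_k + 'I_k.-1))%type.

Definition Gdir (k n : nat) (x y : Gvert k n) : bool :=
  match x, y with
  | None, Some (i, inl j) => (i == 0 :> nat) && (j == 1 :> nat)
  | Some (i, inl j), None => (i == n.-1 :> nat) && (j == 0 :> nat)
  | Some (i, inl _), Some (i', inr _) => i == i'
  | Some (i, inl j), Some (i', inl j') =>
      [&& (i' == i.+1 :> nat), (j == 0 :> nat) & (j' == 1 :> nat)]
  | _, _ => false
  end.

Definition Gadj (k n : nat) : rel (Gvert k n) :=
  fun x y => Gdir x y || Gdir y x.

(* Main.v *)
Require Import Defs.
From mathcomp Require Import all_boot all_order all_algebra.
From mathcomp Require Import classical_sets reals.
From mathcomp Require Import zify.
Import Order.TTheory GRing.Theory Num.Theory.
Set Implicit Arguments. Unset Strict Implicit. Unset Printing Implicit Defensive.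
Lemma uniq_bound (L : seq nat) N : uniq L -> (forall x, x \in L -> x < N) -> size L <= N.
Proof.
move=> uL hL; rewrite -(size_iota 0 N); apply: uniq_leq_size => // x /hL.
by rewrite mem_iota.
Qed.

Definition vA k n (i : 'I_n) (j : 'I_k) : Gvert k n := Some (i, inl j).
Definition vB k n (i : 'I_n) (l : 'I_k.-1) : Gvert k n := Some (i, inr l).

Lemma adjAB k n i j l : @Gadj k n (vA i j) (vB i l).
Proof. by rewrite /Gadj /= eqxx. Qed.
Lemma adjBA k n i j l : @Gadj k n (vB i l) (vA i j).
Proof. by rewrite /Gadj /= eqxx. Qed.
Lemma Gadj_sym k n x y : @Gadj k n x y = Gadj y x.
Proof. by rewrite /Gadj orbC. Qed.

Lemma full_at_B k n cv ce (H : is_total_colouring (@Gadj k n) k.+1 cv ce) i l c :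
  c < k.+1 -> c <> cv (vB i l) -> exists j, ce (vB i l) (vA i j) = c.
Proof.
move: H => [Hv [He [Hs [Hvv [Hve Hee]]]]] hc hcv.
case: (boolP [exists j, ce (vB i l) (vA i j) == c]) => [/existsP [j /eqP] | /existsPn hn].
  by exists j.
exfalso.
have : size (c :: cv (vB i l) :: [seq ce (vB i l) (vA i j) | j <- enum 'I_k]) <= k.+1;
  last by rewrite /= size_map size_enum_ord ltnn.
apply: uniq_bound.
- rewrite /= !inE negb_or -!andbA; apply/and4P; split.
  + by apply/eqP.
  + by apply/mapP => -[j _ E]; move: (hn j); rewrite E eqxx.
  + by apply/mapP => -[j _ E]; apply: (Hve _ _ (adjBA i j l)).
  + rewrite map_inj_uniq ?enum_uniq // => j j' E.
    apply/eqP; apply: contraT => hne; exfalso.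
    apply: (Hee _ _ _ (adjBA i j l) (adjBA i j' l) _ E).
    by apply: contra hne => /eqP [->].
- move=> x; rewrite !inE => /or3P [/eqP -> // | /eqP -> // | /mapP [j _ ->]].
  exact: He (adjBA i j l).
Qed.

Lemma free_unique k n cv ce (H : is_total_colouring (@Gadj k n) k.+1 cv ce)
  (hk : 1 < k) i c (hS : forall l, c <> cv (vB i l)) (hc : c < k.+1) (j1 j2 : 'I_k) :
  (forall l, ce (vA i j1) (vB i l) <> c) -> (forall l, ce (vA i j2) (vB i l) <> c) -> j1 = j2.
Proof.
move=> f1 f2.
have Hs := H.2.2.1; have Hee := H.2.2.2.2.2.
have := fun l => full_at_B H (l := l) hc (hS l).
case/fin_all_exists => g Hg.
apply/eqP; apply: contraT => hne; exfalso.
have : size (val j1 :: val j2 :: [seq val (g l) | l <- enum 'I_k.-1]) <= k;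
  last by rewrite /= size_map size_enum_ord; lia.
apply: uniq_bound.
- rewrite /= !inE negb_or -!andbA; apply/and4P; split.
  + by rewrite val_eqE.
  + apply/mapP => -[l _ /val_inj E]; apply: (f1 l).
    by rewrite E Hs ?Hg // adjAB.
  + apply/mapP => -[l _ /val_inj E]; apply: (f2 l).
    by rewrite E Hs ?Hg // adjAB.
  + rewrite map_inj_uniq ?enum_uniq // => l l' /val_inj E.
    apply/eqP; apply: contraT => hne2; exfalso.
    apply: (Hee (vA i (g l)) (vB i l) (vB i l') (adjAB _ _ _)).
    * by rewrite E adjAB.
    * by apply: contra hne2 => /eqP [->].
    * by rewrite [LHS]Hs ?adjAB // Hg E Hs ?adjAB // Hg.
- move=> x; rewrite !inE => /or3P [/eqP -> | /eqP -> | /mapP [l _ ->]]; exact: ltn_ord.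
Qed.

Lemma block_eq k n cv ce (H : is_total_colouring (@Gadj k n) k.+1 cv ce)
  (hk : 1 < k) i (j0 j1 : 'I_k) (hj : j0 != j1) x0 x1 :
  Gadj (vA i j0) x0 -> Gadj (vA i j1) x1 ->
  (forall l, x0 != vB i l) -> (forall l, x1 != vB i l) ->
  ce (vA i j0) x0 = ce (vA i j1) x1.
Proof.
move=> a0 a1 n0 n1.
move: (H) => [Hv [He [Hs [Hvv [Hve Hee]]]]].
pose cA j := cv (vA i j).
have F1 : forall j l, cA j <> cv (vB i l) by move=> j l; apply: Hvv; apply: adjAB.
have freeA : forall j l, ce (vA i j) (vB i l) <> cA j.
  by move=> j l E; apply: (Hve _ _ (adjAB i j l)); rewrite E.
have cAinj : injective cA.
  move=> j j' E; apply: (free_unique H hk (fun l => F1 j l) (Hv (vA i j)) (freeA j)).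
  by move=> l; rewrite E; apply: freeA.
have l0 : 'I_k.-1 by exists 0; lia.
have key : forall (jx : 'I_k) x, Gadj (vA i jx) x -> (forall l, x != vB i l) ->
    exists l, ce (vA i jx) x = cv (vB i l).
  move=> jx x ax nx.
  case: (boolP [exists l, ce (vA i jx) x == cv (vB i l)]) => [/existsP [l /eqP E] | /existsPn hn].
    by exists l.
  exfalso.
  set h := ce (vA i jx) x.
  have hS : forall l, h <> cv (vB i l) by move=> l E; move: (hn l); rewrite -/h E eqxx.
  have freeX : forall l, ce (vA i jx) (vB i l) <> h.
    move=> l; apply: (Hee _ _ _ (adjAB i jx l) ax).
    by rewrite eq_sym.
  have notA : forall j, cA j <> h.
    move=> j E; case: (eqVneq j jx) => [ej | nej].
      by move: E; rewrite ej => E; apply: (Hve _ _ ax); exact: E.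
    move/negP: nej; apply; apply/eqP; apply: (free_unique H hk (c := h)) => //.
    - by move: ax; apply: He.
    - by move=> l; rewrite -E; apply: freeA.
  have : size (h :: cv (vB i l0) :: [seq cA j | j <- enum 'I_k]) <= k.+1.
    apply: uniq_bound.
    - rewrite /= !inE negb_or -!andbA; apply/and4P; split.
      + by apply/eqP; apply: hS.
      + by apply/mapP => -[j _ E]; apply: (notA j).
      + by apply/mapP => -[j _ E]; apply: (F1 j l0).
      + by rewrite map_inj_uniq ?enum_uniq.
    - move=> y; rewrite !inE => /or3P [/eqP -> | /eqP -> | /mapP [j _ ->]]; last exact: (Hv (vA i j)).
      + exact: He ax.
      + exact: Hv.
  by rewrite /= size_map size_enum_ord ltnn.
have [la Ea] := key j0 x0 a0 n0.
have [lb Eb] := key j1 x1 a1 n1.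
rewrite Ea Eb; apply/eqP; apply: contraT => hne; exfalso.
have : size (cv (vB i la) :: cv (vB i lb) :: [seq cA j | j <- enum 'I_k]) <= k.+1.
  apply: uniq_bound.
  - rewrite /= !inE negb_or -!andbA; apply/and4P; split => //.
    + by apply/mapP => -[j _ E]; apply: (F1 j la).
    + by apply/mapP => -[j _ E]; apply: (F1 j lb).
    + by rewrite map_inj_uniq ?enum_uniq.
  - move=> y; rewrite !inE => /or3P [/eqP -> | /eqP -> | /mapP [j _ ->]]; [exact: Hv | exact: Hv | exact: (Hv (vA i j))].
by rewrite /= size_map size_enum_ord ltnn.
Qed.

Lemma no_total k n : 1 < k -> 0 < n -> ~ has_total_colouring (@Gadj k n) k.+1.
Proof.
case: k => [|[|k]] // _; case: n => // n _ [cv [ce H]].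
move: (H) => [Hv [He [Hs [Hvv [Hve Hee]]]]].
have hk : 1 < k.+2 by [].
pose j0 : 'I_k.+2 := ord0.
pose j1 : 'I_k.+2 := @Ordinal k.+2 1 isT.
have hj : j0 != j1 by [].
pose nxt (i : nat) : Gvert k.+2 n.+1 := if i == n then None else vA (inord i.+1) j1.
pose prv (i : nat) : Gvert k.+2 n.+1 := if i is i'.+1 then vA (inord i') j0 else None.
have blk : forall i, i <= n -> ce (vA (inord i) j0) (nxt i) = ce (vA (inord i) j1) (prv i).
  move=> i hi; apply: (block_eq H hk hj).
  - rewrite /nxt; have [E|ne] := eqVneq i n.
      by rewrite /Gadj /= E inordK ?eqxx.
    rewrite /Gadj /= !inordK ?eqxx //; lia.
  - case: i hi => [|i] hi; first by rewrite /Gadj /j1 /= inordK ?andbF.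
    rewrite /Gadj /= !inordK ?eqxx ?andbT ?orbT //; lia.
  - by move=> l; rewrite /nxt; case: (i == n) => //; apply/eqP => -[].
  - by move=> l; case: i hi => // i _; apply/eqP => -[].
have ch : forall i, i <= n -> ce (vA (inord i) j1) (prv i) = ce (vA (inord 0) j1) None.
  elim=> [|i IH] hi; first by [].
  have -> : prv i.+1 = vA (inord i) j0 by [].
  rewrite Hs; last by rewrite /Gadj /= !inordK ?eqxx ?orbT //; lia.
  have -> : vA (inord i.+1) j1 = nxt i by rewrite /nxt; case: eqP => //; lia.
  by rewrite blk ?IH //; lia.
have := blk n (leqnn n); rewrite ch // /nxt eqxx => E.
have a1 : Gadj None (vA (inord n : 'I_n.+1) j0) by rewrite /Gadj /= inordK // eqxx orbT.
have a2 : Gadj None (vA (inord 0 : 'I_n.+1) j1) by rewrite /Gadj /j1 /= inordK ?andbF.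
apply: (Hee None _ _ a1 a2); first by apply/eqP => -[].
by rewrite Hs // E -Hs.
Qed.
Lemma count_lt_iota c p : count (fun x => x < c) (iota 0 p) = minn c p.
Proof.
elim: p => [|p IH]; first by rewrite minn0.
rewrite -addn1 iotaD count_cat IH /= add0n; lia.
Qed.
Lemma card_ord_lt p c : #|[set t : 'I_p | t < c]| = minn c p.
Proof.
rewrite cardsE -count_lt_iota -val_enum_ord count_map cardE.
by rewrite {1}/enum_mem size_filter enumT; exact: eq_count.
Qed.

Definition sho p (hp : 0 < p) (a : nat) (s : 'I_p) : 'I_p := Ordinal (ltn_pmod (a + s) hp).

Lemma sho_inj p hp a : injective (@sho p hp a).
Proof.
move=> s s' /(congr1 val) /= /eqP; rewrite eqn_modDl !modn_small // => /eqP E.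
exact: val_inj.
Qed.

Lemma card_bad p (hp : 0 < p) a c : #|[set s : 'I_p | c <= (a + s) %% p]| <= p - c.
Proof.
have -> : [set s : 'I_p | c <= (a + s) %% p] = sho hp a @^-1: ~: [set t : 'I_p | t < c].
  by apply/setP => s; rewrite !inE /= -leqNgt.
rewrite card_preimset; last exact: sho_inj.
have := cardsC [set t : 'I_p | t < c]; rewrite card_ord card_ord_lt; lia.
Qed.

Lemma modlt2 x p : x < p + p -> x %% p = if x < p then x else x - p.
Proof.
case: ifP => h; first by rewrite modn_small.
move=> h2; have hpx : p <= x by rewrite leqNgt h.
by rewrite -{1}(subnK hpx) modnDr modn_small //; lia.
Qed.

Lemma shift_sep p q a b s : 0 < q -> a < p -> b < p -> s < p ->
  q <= cdist a b <= p - q -> ((a + s) %% p) %/ q <> ((b + s) %% p) %/ q.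
Proof.
move=> hq ha hb hs /andP [h1 h2].
rewrite (@modlt2 (a + s) p) ?(@modlt2 (b + s) p); try lia.
set A := (if a + s < p then _ else _).
set B := (if b + s < p then _ else _).
have hAB : q <= cdist A B.
  rewrite /A /B /cdist in h1 h2 *; case: ifP => ?; case: ifP => ?; lia.
move=> E.
have eA := divn_eq A q; have eB := divn_eq B q.
have rA := ltn_pmod A hq; have rB := ltn_pmod B hq.
rewrite -E in eB; move: hAB; rewrite /cdist.
set X := A %/ q * q in eA eB; lia.
Qed.

Lemma round_col (T : finType) (e : rel T) m p q cv ce :
  0 < q -> is_pq_total_colouring e p q cv ce ->
  (#|T| + #|T| * #|T|) * (p - m * q) < p -> has_total_colouring e m.
Proof.
move=> hq [Hv [He [Hs [Hvv [Hve Hee]]]]] hN.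
have hp : 0 < p by lia.
pose L := [seq cv x | x <- enum T] ++ [seq ce xy.1 xy.2 | xy <- enum {: T * T}].
have sL : size L = #|T| + #|T| * #|T|.
  by rewrite size_cat !size_map -!enumT -!cardE card_prod.
pose f (s : 'I_p) := \sum_(a <- L) (m * q <= (a + s) %% p).
have hsum : \sum_(s < p) f s < p.
  rewrite /f exchange_big /=.
  apply: leq_ltn_trans hN; rewrite -sL.
  apply: leq_trans (_ : \sum_(a <- L) (p - m * q) <= _).
    apply: leq_sum => a _.
    apply: leq_trans (card_bad hp a (m * q)); rewrite -sum1_card [X in _ <= X]big_mkcond /=.
    by apply: leq_sum => s _; rewrite inE; case: (m * q <= _).
  by rewrite big_const_seq count_predT iter_addn_0 mulnC.
have [s hs] : exists s : 'I_p, f s = 0.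
  case: (boolP [exists s : 'I_p, f s == 0]) => [/existsP [s /eqP] | /existsPn hn].
    by exists s.
  exfalso; move: hsum; rewrite ltnNge => /negP; apply.
  rewrite -{1}(card_ord p) -sum1_card; apply: leq_sum => s _.
  by move: (hn s); rewrite lt0n.
move/eqP: hs; rewrite sum_nat_seq_eq0 => /allP hall.
have good : forall a, a \in L -> (a + s) %% p < m * q.
  by move=> a /hall; rewrite ltnNge; case: (m * q <= _).
exists (fun x => ((cv x + s) %% p) %/ q), (fun x y => ((ce x y + s) %% p) %/ q).
have gv : forall x, (cv x + s) %% p < m * q.
  by move=> x; apply: good; rewrite mem_cat map_f ?mem_enum.
have ge : forall x y, (ce x y + s) %% p < m * q.
  move=> x y; apply: good; rewrite mem_cat; apply/orP; right.
  by apply/mapP; exists (x, y); rewrite ?mem_enum.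
split; first by move=> x; rewrite ltn_divLR.
split; first by move=> x y _; rewrite ltn_divLR.
split; first by move=> x y exy; rewrite Hs.
split; first by move=> x y exy; exact: shift_sep hq (Hv x) (Hv y) (ltn_ord s) (Hvv _ _ exy).
split; first by move=> x y exy; exact: shift_sep hq (Hv x) (He _ _ exy) (ltn_ord s) (Hve _ _ exy).
move=> x y z exy exz yz; exact: shift_sep hq (He _ _ exy) (He _ _ exz) (ltn_ord s) (Hee _ _ _ exy exz yz).
Qed.
Definition vidx k (j : nat) := if j == 0 then k.-1 else j.-1.
Definition eidx k (j l : nat) := if j + l < k then j + l else j + l - k.

Definition cvK k n (x : Gvert k n) : nat :=
  match x with
  | None => 1 * n + 0
  | Some (i, inl j) => vidx k j * n + i
  | Some (i, inr _) => k * n + i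
  end.

Definition dcolK k n (x y : Gvert k n) : nat :=
  match x, y with
  | None, Some (_, inl _) => k * n + 0
  | Some (_, inl _), None => k.+1 * n + 0
  | Some (i, inl j), Some (_, inr l) => eidx k j l * n + i
  | Some (i, inl _), Some (_, inl _) => k * n + (i + 1)
  | _, _ => 0
  end.

Definition ceK k n (x y : Gvert k n) : nat := if Gdir x y then dcolK x y else dcolK y x.

Definition okcond (k n c t c' t' : nat) : Prop :=
  ((c' < c /\ t' <= t) \/ (c' + 2 <= c /\ t' <= t + n)) /\
  ((c <= c' + k - 1 /\ t <= t' + n + 1) \/ (c <= c' + k /\ t <= t' + 1) \/
   (c <= c' + k + 1 /\ t + n <= t' + 1)).

Lemma okc k n c t c' t' : 0 < n -> c <= k.+1 -> c' <= k.+1 -> t <= n -> t' <= n ->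
  okcond k n c t c' t' \/ okcond k n c' t' c t ->
  n <= cdist (c * n + t) (c' * n + t') <= k.+1 * n + 1 - n.
Proof. rewrite /okcond /cdist => *; nia. Qed.


Lemma neqAA k n (i i' : 'I_n) (j j' : 'I_k) :
  (Some (i, inl j) != Some (i', inl j') :> Gvert k n) = ((i : nat) != i') || ((j : nat) != j').
Proof. by rewrite -[_ == _]/((i, inl j) == (i', inl j')) xpair_eqE negb_and. Qed.
Lemma neqBB k n (i i' : 'I_n) (j j' : 'I_k.-1) :
  (Some (i, inr j) != Some (i', inr j') :> Gvert k n) = ((i : nat) != i') || ((j : nat) != j').
Proof. by rewrite -[_ == _]/((i, inr j) == (i', inr j')) xpair_eqE negb_and. Qed.

Lemma ordeqE m (i i' : 'I_m) : (i == i') = ((i : nat) == i').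
Proof. by []. Qed.

Ltac bnd := repeat match goal with x : _ |- _ =>
   lazymatch goal with _ : is_true (nat_of_ord x < _) |- _ => fail | _ => let h := fresh "hb" in move: (ltn_ord x) => h end end.

Ltac bdestr := repeat match goal with
 | H : is_true (_ || _) |- _ => case/orP: H => H
 | H : is_true (_ && _) |- _ => let h := fresh "ha" in case/andP: H => h H
 | H : is_true (_ == _) |- _ => move/eqP: H => H; try subst
 end.

Ltac splitif := repeat (let h := fresh "hi" in case: ifP => h).
Ltac prepG := repeat match goal with
  | H : is_true (Gadj _ _) |- _ => rewrite /Gadj /= in H
  | H : is_true (Some (_, inl _) != Some (_, inl _)) |- _ => rewrite neqAA in H
  | H : is_true (Some (_, inr _) != Some (_, inr _)) |- _ => rewrite neqBB in H
  end; bdestr; bnd.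

Ltac finK := try (exfalso; lia); try (apply: okc => //; try rewrite /okcond; try rewrite /vidx; try rewrite /eidx; splitif; lia).

Lemma colK_vv k n : 2 < k -> 0 < n -> forall x y : Gvert k n, Gadj x y ->
  n <= cdist (cvK x) (cvK y) <= k.+1 * n + 1 - n.
Proof.
move=> hk hn [[i [j|l]]|] [[i' [j'|l']]|] H; prepG; rewrite /cvK; finK.
Qed.

Lemma colK_ve k n : 2 < k -> 0 < n -> forall x y : Gvert k n, Gadj x y ->
  n <= cdist (cvK x) (ceK x y) <= k.+1 * n + 1 - n.
Proof.
move=> hk hn [[i [j|l]]|] [[i' [j'|l']]|] H; prepG; rewrite /cvK /ceK /dcolK /= ?ordeqE; splitif; finK.
Qed.

Lemma colK_ee k n : 2 < k -> 0 < n -> forall x y z : Gvert k n, Gadj x y -> Gadj x z -> y != z ->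
  n <= cdist (ceK x y) (ceK x z) <= k.+1 * n + 1 - n.
Proof.
move=> hk hn [[i [j|l]]|] [[i' [j'|l']]|] [[i2 [j2|l2]]|] H H2 H3; prepG; rewrite /ceK /dcolK /= ?ordeqE; splitif; finK.
Qed.

Lemma ltc k n c t : c <= k.+1 -> t <= n -> (c <= k \/ t = 0) -> c * n + t < k.+1 * n + 1.
Proof. move=> *; nia. Qed.

Ltac finL := try (exfalso; lia); try (apply: ltc => //; try rewrite /vidx; try rewrite /eidx; splitif; lia).

Lemma colK_v k n : 2 < k -> 0 < n -> forall x : Gvert k n, cvK x < k.+1 * n + 1.
Proof. move=> hk hn [[i [j|l]]|]; bnd; rewrite /cvK; finL. Qed.

Lemma colK_e k n : 2 < k -> 0 < n -> forall x y : Gvert k n, Gadj x y -> ceK x y < k.+1 * n + 1.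
Proof.
move=> hk hn [[i [j|l]]|] [[i' [j'|l']]|] H; prepG; rewrite /ceK /dcolK /= ?ordeqE; splitif; finL.
Qed.

Lemma Gdir_asym k n (x y : Gvert k n) : Gdir x y -> ~~ Gdir y x.
Proof.
case: x => [[i [j|l]]|]; case: y => [[i' [j'|l']]|] => //= H; prepG; rewrite ?ordeqE; lia.
Qed.

Lemma ceK_sym k n (x y : Gvert k n) : Gadj x y -> ceK x y = ceK y x.
Proof.
rewrite /Gadj /ceK; case/orP => H.
  by rewrite H (negbTE (Gdir_asym H)).
by rewrite H (negbTE (Gdir_asym H)).
Qed.

Lemma colK_ok k n : 2 < k -> 0 < n ->
  is_pq_total_colouring (@Gadj k n) (k.+1 * n + 1) n (@cvK k n) (@ceK k n).
Proof.
move=> hk hn; split; first exact: colK_v.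
split; first exact: colK_e.
split; first by move=> x y; apply: ceK_sym.
split; first exact: colK_vv.
split; first exact: colK_ve.
exact: colK_ee.
Qed.

Definition pos2 n (x : Gvert 2 n) : nat :=
  match x with
  | None => 0
  | Some (i, inl j) => 6 + 6 * i - 4 * j
  | Some (i, inr _) => 4 + 6 * i
  end.
Definition dpos2 n (x y : Gvert 2 n) : nat :=
  match x, y with
  | None, Some (_, inl _) => 1
  | Some (_, inl _), None => 6 * n + 1
  | Some (i, inl j), Some (_, inr _) => 5 + 6 * i - 2 * j
  | Some (i, inl _), Some (_, inl _) => 7 + 6 * i
  | _, _ => 0
  end.
Definition cv2 n (x : Gvert 2 n) : nat := (pos2 x * (2 * n + 1)) %% (3 * n + 1).
Definition ce2 n (x y : Gvert 2 n) : nat :=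
  ((if Gdir x y then dpos2 x y else dpos2 y x) * (2 * n + 1)) %% (3 * n + 1).

Lemma okD n x D : 0 < n -> x < 3 * n + 1 -> n <= D <= 2 * n + 1 ->
  n <= cdist x ((x + D) %% (3 * n + 1)) <= 3 * n + 1 - n.
Proof.
move=> hn hx hD; rewrite modlt2; last by lia.
rewrite /cdist; case: ifP => h; lia.
Qed.

Lemma okd n s d : 0 < n -> (d == 1) || (d == 2) ->
  n <= cdist ((s * (2 * n + 1)) %% (3 * n + 1)) (((s + d) * (2 * n + 1)) %% (3 * n + 1))
    <= 3 * n + 1 - n.
Proof.
move=> hn hd; rewrite mulnDl -modnDm.
have -> : (d * (2 * n + 1)) %% (3 * n + 1) = if d == 1 then 2 * n + 1 else n + 1.
  case/orP: hd => /eqP ->; rewrite /=.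
    by rewrite mul1n modn_small //; lia.
  have -> : 2 * (2 * n + 1) = (n + 1) + (3 * n + 1) by lia.
  by rewrite modnDr modn_small //; lia.
apply: okD => //; first by apply: ltn_pmod; lia.
by case: ifP => _; lia.
Qed.

Lemma cdistC a b : cdist a b = cdist b a.
Proof. by rewrite /cdist maxnC minnC. Qed.

Lemma per2 n s : ((s + (6 * n + 2)) * (2 * n + 1)) %% (3 * n + 1) = (s * (2 * n + 1)) %% (3 * n + 1).
Proof.
have -> : (s + (6 * n + 2)) * (2 * n + 1) = (2 * (2 * n + 1)) * (3 * n + 1) + s * (2 * n + 1).
  by nia.
by rewrite modnMDl.
Qed.

Lemma okpos n s t : 0 < n ->
  t = s + 1 \/ t = s + 2 \/ s = t + 1 \/ s = t + 2 \/
  t + (6 * n + 2) = s + 1 \/ t + (6 * n + 2) = s + 2 \/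
  s + (6 * n + 2) = t + 1 \/ s + (6 * n + 2) = t + 2 ->
  n <= cdist ((s * (2 * n + 1)) %% (3 * n + 1)) ((t * (2 * n + 1)) %% (3 * n + 1))
    <= 3 * n + 1 - n.
Proof.
move=> hn [E|[E|[E|[E|[E|[E|[E|E]]]]]]].
- by rewrite E; apply: okd.
- by rewrite E; apply: okd.
- by rewrite E cdistC; apply: okd.
- by rewrite E cdistC; apply: okd.
- by rewrite -(per2 n t) E; apply: okd.
- by rewrite -(per2 n t) E; apply: okd.
- by rewrite -(per2 n s) E cdistC; apply: okd.
- by rewrite -(per2 n s) E cdistC; apply: okd.
Qed.

Ltac fin2 := try (exfalso; lia); try (apply: okpos => //; try rewrite /pos2; try rewrite /dpos2; rewrite /= ?ordeqE; splitif; lia).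

Lemma ce2_sym n (x y : Gvert 2 n) : Gadj x y -> ce2 x y = ce2 y x.
Proof.
rewrite /Gadj /ce2; case/orP => H.
  by rewrite H (negbTE (Gdir_asym H)).
by rewrite H (negbTE (Gdir_asym H)).
Qed.

Lemma col2_vv n : 0 < n -> forall x y : Gvert 2 n, Gadj x y ->
  n <= cdist (cv2 x) (cv2 y) <= 3 * n + 1 - n.
Proof.
move=> hn [[i [j|l]]|] [[i' [j'|l']]|] H; prepG; rewrite /cv2; fin2.
Qed.

Lemma col2_ve n : 0 < n -> forall x y : Gvert 2 n, Gadj x y ->
  n <= cdist (cv2 x) (ce2 x y) <= 3 * n + 1 - n.
Proof.
move=> hn [[i [j|l]]|] [[i' [j'|l']]|] H; prepG; rewrite /cv2 /ce2; fin2.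
Qed.

Lemma col2_ee n : 0 < n -> forall x y z : Gvert 2 n, Gadj x y -> Gadj x z -> y != z ->
  n <= cdist (ce2 x y) (ce2 x z) <= 3 * n + 1 - n.
Proof.
move=> hn [[i [j|l]]|] [[i' [j'|l']]|] [[i2 [j2|l2]]|] H H2 H3; prepG; rewrite /ce2; fin2.
Qed.

Lemma col2_ok n : 0 < n -> is_pq_total_colouring (@Gadj 2 n) (3 * n + 1) n (@cv2 n) (@ce2 n).
Proof.
move=> hn; split; first by move=> x; apply: ltn_pmod; lia.
split; first by move=> x y _; apply: ltn_pmod; lia.
split; first by move=> x y; apply: ce2_sym.
split; first exact: col2_vv.
split; first exact: col2_ve.
exact: col2_ee.
Qed.

Lemma has_col k n : 1 < k -> 0 < n -> has_pq_total_colouring (@Gadj k n) (k.+1 * n + 1) n.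
Proof.
case: k => [|[|[|k]]] // _ hn.
  by exists (@cv2 n), (@ce2 n); apply: col2_ok.
by exists (@cvK k.+3 n), (@ceK k.+3 n); apply: colK_ok.
Qed.

Lemma ratio_ge (R : realType) m N p q : 0 < q -> 0 < N -> 0 < p -> p <= N * (p - m * q) ->
  (m%:R + m%:R / N%:R <= p%:R / q%:R :> R)%R.
Proof.
move=> hq hN hp hle.
have hnat : (m * N + m) * q <= p * N.
  have hd : m * q < p.
    case: (ltnP (m * q) p) => // h.
    have E0 : p - m * q = 0 by apply/eqP; rewrite subn_eq0.
    by move: hle; rewrite E0 muln0; lia.
  nia.
have -> : (m%:R + m%:R / N%:R = (m * N + m)%:R / N%:R :> R)%R.
  by rewrite natrD natrM mulrDl mulfK // pnatr_eq0 -lt0n.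
rewrite ler_pdivlMr ?ltr0n // mulrAC ler_pdivrMr ?ltr0n // -!natrM ler_nat.
exact: hnat.
Qed.

Unset Implicit Arguments.

Theorem theorem4 (R : realType) (k n : nat) (hk : (2 <= k)%N) (hn : (1 <= n)%N) :
  ~ has_total_colouring (@Gadj k n) k.+1 /\
  ((k.+1)%:R < circ_total_chromatic R (@Gadj k n) /\
   circ_total_chromatic R (@Gadj k n) <= (k.+1)%:R + 1 / n%:R)%R.
Proof.
have NT := no_total hk hn.
split => //.
set E := [set r : R | exists p q : nat,
         [/\ (1 <= q <= p)%N, has_pq_total_colouring (@Gadj k n) p q
           & r = (p%:R / q%:R)%R]]%classic.
have -> : circ_total_chromatic R (@Gadj k n) = inf E by [].
have Ep : E ((k.+1 * n + 1)%:R / n%:R)%R.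
  exists (k.+1 * n + 1), n; split => //; last exact: has_col.
  apply/andP; split => //; nia.
have Elb : has_lbound E.
  exists 0%R => r [p [q [_ _ ->]]].
  by rewrite divr_ge0 ?ler0n.
pose N := #|Gvert k n| + #|Gvert k n| * #|Gvert k n|.
have hN : 0 < N.
  have : 0 < #|Gvert k n| by apply/card_gt0P; exists None.
  rewrite /N; lia.
have lbE : forall r, E r -> ((k.+1)%:R + (k.+1)%:R / N%:R <= r :> R)%R.
  move=> r [p [q [/andP [hq hqp] [cv [ce hc]] ->]]].
  apply: ratio_ge => //; first by lia.
  rewrite leqNgt; apply/negP => hlt.
  by apply: NT; apply: (round_col (m := k.+1) hq hc).
split.
- apply: (@lt_le_trans _ _ ((k.+1)%:R + (k.+1)%:R / N%:R)%R).
    by rewrite ltrDl divr_gt0 ?ltr0n.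
  apply: lb_le_inf; first by exists ((k.+1 * n + 1)%:R / n%:R)%R.
  exact: lbE.
- apply: le_trans (ge_inf Elb Ep) _.
  rewrite natrD natrM mulrDl mulfK ?pnatr_eq0 -?lt0n //.
Qed.
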